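(* Let $\mathbf u$ be an infinite word over a finite alphabet whose language is closed under reversal and whose defect $D(\mathbf u)$ is finite. Let $q$ be a prefix of $\mathbf u$ such that $D(\mathbf u)=D(q)$. Then for every prefix $p$ of $\mathbf u$ with $|p|>|q|$, $$\#\{x\in\mathcal L(p): x \text{ is a palindrome},\ |x|\le |q|,\ x\notin\mathcal L(q)\}+\sum_{n=|q|+1}^{|p|}\mathcal P_p(n)=|p|-|q|.$$
   Context: For a finite word $w=w_0\cdots w_{n-1}$ its reversal is $\overline{w}=w_{n-1}\cdots w_0$; $w$ is a palindrome if $w=\overline{w}$ (the empty word is a palindrome). $\mathcal L(v)$ denotes the set of factors of a (finite or infinite) word $v$; the language of $\mathbf u$ is closed under reversal if $w\in\mathcal L(\mathbf u)$ implies $\overline w\in\mathcal L(\mathbf u)$. For a finite word $p$, $\mathcal P_p(n)$ is the number of palindromes of length $n$ that are factors of $p$. The defect of a finite word $w$ is $D(w)=|w|+1-(\text{number of distinct palindromic factors of } w, \text{ including the empty word})$; the defect of an infinite word is $D(\mathbf u)=\sup\{D(w): w \text{ a prefix of } \mathbf u\}$. *)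

(* Defs.v *)
From mathcomp Require Import all_boot.
Set Implicit Arguments. Unset Strict Implicit. Unset Printing Implicit Defensive.

Section Words.
Variable A : finType.

Definition infword := nat -> A.

Definition upref (u : infword) (n : nat) : seq A := [seq u i | i <- iota 0 n].

Definition palindrome (w : seq A) : bool := w == rev w.

Definition factors (w : seq A) : seq (seq A) :=
  undup [seq take j (drop i w) | i <- iota 0 (size w).+1,
                                 j <- iota 0 (size w - i).+1].

(* Distinct palindromic factors of w, including the empty word. *)
Definition pal_factors (w : seq A) : seq (seq A) := filter palindrome (factors w).

(* Defect of a finite word: |w| + 1 - #distinct palindromic factors
   (this number is always >= 0, so truncated subtraction is harmless). *)
Definition defect (w : seq A) : nat := (size w).+1 - size (pal_factors w).

Definition in_lang (u : infword) (x : seq A) : Prop :=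
  exists n, infix x (upref u n).

Definition closed_under_reversal (u : infword) : Prop :=
  forall x, in_lang u x -> in_lang u (rev x).

(* d is the defect of the infinite word u, i.e. the supremum (in nat,
   hence finite) of the defects of its prefixes. *)
Definition defect_inf_is (u : infword) (d : nat) : Prop :=
  (forall n, defect (upref u n) <= d) /\
  (forall b, (forall n, defect (upref u n) <= b) -> d <= b).

Definition palcount (p : seq A) (n : nat) : nat :=
  size [seq x <- factors p | palindrome x && (size x == n)].

End Words.

(* Main.v *)
Require Import Defs.
From mathcomp Require Import all_boot.
From mathcomp Require Import zify.

Section S.
Variable A : finType.
Implicit Types w x y : seq A.

Lemma mem_factors w x : (x \in factors w) = infix x w.
Proof.
rewrite mem_undup; apply/allpairsPdep/idP.
  move=> [i [j [_ _ ->]]].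
  exact: (infix_trans (infix_take _ _) (infix_drop _ _)).
move=> /infixP [s [s' ->]].
exists (size s), (size x); split.
- rewrite mem_iota !size_cat; move: (size s) (size x) (size s') => a b c; lia.
- rewrite mem_iota !size_cat; move: (size s) (size x) (size s') => a b c; lia.
- by rewrite drop_size_cat // take_size_cat.
Qed.

Lemma factors_uniq w : uniq (factors w).
Proof. exact: undup_uniq. Qed.

Lemma new_pal_unique w a x y :
  palindrome x -> palindrome y ->
  infix x (rcons w a) -> infix y (rcons w a) ->
  ~~ infix x w -> ~~ infix y w -> x = y.
Proof.
move=> px py.
rewrite !infix_rconsl => /orP[sx|->//] /orP[sy|->//] nx ny.
wlog le : x y px py sx sy nx ny / size x <= size y.
  move=> H; case: (leqP (size x) (size y)) => h; first exact: H.
  by symmetry; apply: H => //; exact: ltnW.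
have sxy : suffix x y.
  move: sx sy; rewrite !suffixE => /eqP ex /eqP ey.
  apply/eqP; rewrite -ex -ey drop_drop; congr drop.
  have : size x <= size (rcons w a) by rewrite -ex size_drop leq_subr.
  have : size y <= size (rcons w a) by rewrite -ey size_drop leq_subr.
  rewrite !size_drop; move: le; move: (size x) (size y) (size (rcons w a)) => a1 b1 c1; lia.
move: le; rewrite leq_eqVlt => /orP[/eqP e|lt].
  by move: sxy; rewrite suffixE e subnn drop0 => /eqP.
exfalso; move/negP: nx; apply.
have pxy : prefix x y.
  by rewrite -suffix_rev -(eqP px) -(eqP py).
case/suffixP: sy => z ez.
clear ny. case/lastP: y ez px py sxy pxy lt => [|y' b] ez px py sxy pxy lt.
  by rewrite /= ltn0 in lt.
rewrite -rcons_cat in ez.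
have ew : w = z ++ y'.
  by move/rcons_inj: ez => [].
rewrite ew; apply: infix_catl; apply: prefixW.
move: pxy; rewrite prefixE => /eqP <-.
rewrite -cats1 take_cat; case: ltnP => h.
  exact: prefix_take.
rewrite size_rcons ltnS in lt.
have -> : size x - size y' = 0 by apply/eqP; rewrite subn_eq0.
by rewrite take0 cats0 prefix_refl.
Qed.

Lemma mem_pal_factors w x : (x \in pal_factors w) = palindrome x && infix x w.
Proof. by rewrite mem_filter mem_factors. Qed.

Lemma pal_factors_uniq w : uniq (pal_factors w).
Proof. exact/filter_uniq/factors_uniq. Qed.

Lemma pal_rcons w a : size (pal_factors (rcons w a)) <= (size (pal_factors w)).+1.
Proof.
case: (boolP (has (fun x => x \notin pal_factors w) (pal_factors (rcons w a)))).
  move=> /hasP [L HL1 HL2].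
  apply: (@leq_trans (size (L :: pal_factors w))) => //.
  apply: uniq_leq_size; first exact: pal_factors_uniq.
  move=> y Hy; rewrite in_cons; apply/orP.
  case: (boolP (y \in pal_factors w)) => ny; [by right | left; apply/eqP].
  move: Hy HL1 ny HL2; rewrite !mem_pal_factors => /andP[py iy] /andP[pL iL].
  rewrite py pL /= => ny nL.
  exact: new_pal_unique py pL iy iL ny nL.
move=> /hasPn H.
apply: leq_trans (leqnSn _).
apply: uniq_leq_size; first exact: pal_factors_uniq.
by move=> y /H; rewrite negbK.
Qed.

Lemma upref_S (u : infword A) k : upref u k.+1 = rcons (upref u k) (u k).
Proof. by rewrite /upref -addn1 iotaD map_cat cats1. Qed.

Lemma pal_bound (u : infword A) k : size (pal_factors (upref u k)) <= k.+1.
Proof.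
elim: k => [|k IH]; first by [].
by rewrite upref_S; apply: leq_trans (pal_rcons _ _) _.
Qed.

Lemma defect_mono (u : infword A) k l : k <= l -> defect (upref u k) <= defect (upref u l).
Proof.
elim: l => [|l IH]; first by rewrite leqn0 => /eqP->.
rewrite leq_eqVlt => /orP[/eqP->//|]; rewrite ltnS => /IH h.
apply: leq_trans h _.
rewrite /defect upref_S size_rcons.
have := pal_rcons (upref u l) (u l).
have := pal_bound u l.
rewrite /upref size_map size_iota.
move: (size (pal_factors _)) (size (pal_factors _)) => a1 b1; lia.
Qed.

Lemma sum_eqb (c m n : nat) : \sum_(m <= k < n) (c == k) = (m <= c < n).
Proof.
have -> : \sum_(m <= k < n) (c == k) = \sum_(m <= k < n | c == k) 1.
  by rewrite [RHS]big_mkcond; apply: eq_bigr => k _; case: (c == k).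
rewrite sum1_count (@eq_count _ _ (pred1 c)); last by move=> k /=; rewrite eq_sym.
by rewrite count_uniq_mem ?iota_uniq // mem_index_iota.
Qed.

Lemma count_add (T : Type) (a b c : pred T) s :
  (forall t, a t + b t = c t) -> count a s + count b s = count c s.
Proof.
move=> H; elim: s => //= t s IH; rewrite -H -IH.
move: (a t : nat) (b t : nat) (count a s) (count b s) => *; lia.
Qed.

Lemma infix_size x y : infix x y -> size x <= size y.
Proof. by move/infixP=> [s [s' ->]]; rewrite !size_cat; move: (size s) (size x) (size s') => *; lia. Qed.

Lemma upref_prefix (u : infword A) m n : m <= n -> infix (upref u m) (upref u n).
Proof.
move=> h; rewrite /upref -(subnKC h) iotaD map_cat; exact: prefix_infix.
Qed.

Lemma sum_palcount (s : seq (seq A)) m n :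
  (forall x, x \in s -> size x <= n) ->
  \sum_(m.+1 <= k < n.+1) size [seq x <- s | palindrome x && (size x == k)]
  = count (fun x => palindrome x && (m < size x)) s.
Proof.
elim: s => [|x s IH] H.
  by rewrite big1.
rewrite /=.
under eq_bigr => k _ do rewrite /= fun_if /=.
have -> : \sum_(m.+1 <= k < n.+1)
     (if palindrome x && (size x == k) then
        (size [seq x0 <- s | palindrome x0 && (size x0 == k)]).+1
      else size [seq x0 <- s | palindrome x0 && (size x0 == k)])
  = \sum_(m.+1 <= k < n.+1) ((palindrome x && (size x == k)) +
       size [seq x0 <- s | palindrome x0 && (size x0 == k)]).
  by apply: eq_bigr => k _; case: ifP.
rewrite big_split /= IH; last by move=> y hy; apply: H; rewrite in_cons hy orbT.
congr (_ + _).
have hx : size x <= n by apply: H; rewrite in_cons eqxx.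
case: (palindrome x) => /=; last by rewrite big1.
by rewrite sum_eqb ltnS hx andbT.
Qed.
End S.

Theorem lemma11 (A : finType) (u : infword A) (m : nat)
  (Hrev : closed_under_reversal u)
  (Hfin : exists d, defect_inf_is u d)
  (Hq : defect_inf_is u (defect (upref u m))) :
  forall n, m < n ->
    size [seq x <- factors (upref u n) |
           palindrome x && (size x <= m) && ~~ infix x (upref u m)]
    + \sum_(m.+1 <= k < n.+1) palcount (upref u n) k = n - m.
Proof.
move=> n hmn.
set p := upref u n; set q := upref u m.
have hsp : size p = n by rewrite /p /upref size_map size_iota.
have hsq : size q = m by rewrite /q /upref size_map size_iota.
rewrite /palcount sum_palcount; last first.
  by move=> x; rewrite mem_factors -hsp; apply: infix_size.
rewrite size_filter.
rewrite (@count_add _ _ _ (fun x => palindrome x && ~~ infix x q)); last first.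
  move=> x; case: (palindrome x) => //=.
  case: (leqP (size x) m) => h /=; first by rewrite addn0.
  suff -> : infix x q = false by [].
  apply/negP => /infix_size; rewrite hsq; lia.
have E1 : count (fun x => palindrome x && ~~ infix x q) (factors p)
        + count (fun x => palindrome x && infix x q) (factors p)
        = size (pal_factors p).
  rewrite /pal_factors size_filter; apply: count_add => x.
  by case: (palindrome x); case: (infix x q).
have E2 : count (fun x => palindrome x && infix x q) (factors p) = size (pal_factors q).
  rewrite -size_filter; apply: perm_size; apply: uniq_perm.
  - exact/filter_uniq/factors_uniq.
  - exact: pal_factors_uniq.
  move=> x; rewrite mem_filter mem_factors mem_pal_factors.
  case: (palindrome x) => //=; case hx: (infix x q) => //=.
  exact: (@infix_trans _ q x p hx (upref_prefix _ u _ _ (ltnW hmn))).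
have Bp := pal_bound _ u n.
have Bq := pal_bound _ u m.
have D1 := (proj1 Hq) n.
have D2 := defect_mono _ u _ _ (ltnW hmn).
move: D1 D2; rewrite /defect -/p -/q hsp hsq => D1 D2.
rewrite -/p -/q in Bp Bq.
move: E1 E2 D1 D2 Bp Bq.
move: (count _ (factors p)) (count _ (factors p)) (size (pal_factors p)) (size (pal_factors q)) => *.
lia.
Qed.
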